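(* Let $H\in\mathbb{C}^{n\times n}$ be PT-symmetric, i.e. there exists a matrix $P\in\mathbb{C}^{n\times n}$ with $P^{2}=I$ such that $P\bar{H}=HP$, where $\bar{H}$ is the entrywise complex conjugate of $H$. Then $H$ is pseudo-Hermitian, i.e. there exist a non-singular Hermitian matrix $G\in\mathbb{C}^{n\times n}$ and a Hermitian matrix $S\in\mathbb{C}^{n\times n}$ such that $H=-G^{-1}S$. This holds regardless of whether $H$ is diagonalizable.
   Context: Here $P$ is a (complex-linear) matrix representing a parity operator and $T$ is complex conjugation; the condition $PTH=HPT$ is equivalent to $P\bar{H}-HP=0$. Equivalently, with $A=-iH$, pseudo-Hermiticity of $H$ means $A=iG^{-1}S$ for some non-singular Hermitian $G$ and Hermitian $S$. *)

(* Defs.v *)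
From HB Require Import structures.
From mathcomp Require Import all_boot all_order all_algebra.
From mathcomp Require Import complex.
From mathcomp Require Import Rstruct.
From Stdlib Require Import Reals.
Set Implicit Arguments. Unset Strict Implicit. Unset Printing Implicit Defensive.
Import Order.TTheory GRing.Theory Num.Theory.
Local Open Scope ring_scope.

Notation Cplx := (complex Rdefinitions.R).

Definition conjmx (m n : nat) (A : 'M[Cplx]_(m, n)) : 'M[Cplx]_(m, n) :=
  map_mx (fun z : Cplx => z^*) A.

Definition hermitian (n : nat) (A : 'M[Cplx]_n) : Prop := conjmx A^T = A.

Definition PT_symmetric (n : nat) (H : 'M[Cplx]_n) : Prop :=
  exists P : 'M[Cplx]_n, P *m P = 1%:M /\ P *m conjmx H = H *m P.

Definition pseudo_hermitian (n : nat) (H : 'M[Cplx]_n) : Prop :=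
  exists G S : 'M[Cplx]_n,
    [/\ hermitian G, G \in unitmx, hermitian S & H = - (invmx G *m S)].

(* Main.v *)
Require Import Defs.
From mathcomp Require Import all_boot all_order all_algebra.
From mathcomp Require Import complex.
From mathcomp Require Import Rstruct zify fingroup perm ring.
Set Implicit Arguments. Unset Strict Implicit. Unset Printing Implicit Defensive.
Import GRing.Theory Num.Theory.
Local Open Scope ring_scope.

Definition trsim (F : fieldType) n (A : 'M[F]_n) :=
  exists Y : 'M_n, Y \in unitmx /\ Y *m A = A^T *m Y.

Lemma trsim_transfer (F : fieldType) n m (A : 'M[F]_n) (Q : 'M_(m,n)) (D : 'M_m) :
  row_free Q -> row_full Q -> Q *m A = D *m Q -> trsim D -> trsim A.
Proof.
move=> fQ fullQ QA [Y [YU YD]].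
exists (Q^T *m Y *m Q); split.
  by rewrite -row_free_unit /row_free mxrankMfree // mxrankMfree ?row_free_unit // mxrank_tr.
rewrite -(mulmxA _ Q A) QA mulmxA -(mulmxA Q^T) YD mulmxA -trmx_mul -QA trmx_mul.
by rewrite !mulmxA.
Qed.

Lemma trsim_block (F : fieldType) k1 k2 (B1 : 'M[F]_k1) (B2 : 'M[F]_k2) :
  trsim B1 -> trsim B2 -> trsim (block_mx B1 0 0 B2).
Proof.
move=> [Y1 [U1 E1]] [Y2 [U2 E2]]; exists (block_mx Y1 0 0 Y2); split.
  by rewrite unitmxE det_ublock unitrM -!unitmxE U1 U2.
by rewrite tr_block_mx !mulmx_block !trmx0 !mulmx0 !mul0mx !addr0 !add0r E1 E2.
Qed.

Lemma trsim_split (F : fieldType) n (A : 'M[F]_n) k1 k2 (U1 : 'M_(k1,n)) (U2 : 'M_(k2,n))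
   (B1 : 'M_k1) (B2 : 'M_k2) :
 U1 *m A = B1 *m U1 -> U2 *m A = B2 *m U2 ->
 row_free (col_mx U1 U2) -> row_full (col_mx U1 U2) ->
 trsim B1 -> trsim B2 -> trsim A.
Proof.
move=> E1 E2 fr fu T1 T2.
apply: (trsim_transfer fr fu (D := block_mx B1 0 0 B2)); last exact: trsim_block.
by rewrite mul_col_mx mul_block_col !mul0mx addr0 add0r E1 E2.
Qed.

Lemma trsim_shift (F : fieldType) n (N : 'M[F]_n) (l : F) :
  trsim N -> trsim (N + l%:M).
Proof.
move=> [Y [U E]]; exists Y; split => //.
have -> : (N + l%:M)^T = N^T + l%:M by apply/matrixP => i j; rewrite !mxE eq_sym.
by rewrite mulmxDl mulmxDr E scalar_mxC.
Qed.

Lemma rb_stable (F : fieldType) n (A : 'M[F]_n) r (S : 'M_(r,n)) :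
  (S *m A <= S)%MS ->
  row_base S *m A = (row_base S *m A *m pinvmx (row_base S)) *m row_base S.
Proof.
move=> sS; rewrite mulmxKpV //.
apply: submx_trans (_ : S *m A <= _)%MS; first by apply: submxMr; rewrite eq_row_base.
by rewrite eq_row_base.
Qed.

Lemma trsim_subspace (F : fieldType) n (A : 'M[F]_n) r1 r2 (S1 : 'M_(r1,n)) (S2 : 'M_(r2,n)) :
  (S1 *m A <= S1)%MS -> (S2 *m A <= S2)%MS -> (S1 :&: S2 = 0)%MS ->
  (\rank S1 + \rank S2)%N = n ->
  trsim (row_base S1 *m A *m pinvmx (row_base S1)) ->
  trsim (row_base S2 *m A *m pinvmx (row_base S2)) -> trsim A.
Proof.
move=> s1 s2 cap rk T1 T2.
have cap' : (row_base S1 :&: row_base S2 = 0)%MS.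
  apply/eqP; rewrite (eqmx_eq0 (cap_eqmx (eq_row_base S1) (eq_row_base S2))).
  by rewrite cap.
have rkc : \rank (col_mx (row_base S1) (row_base S2)) = n.
  by rewrite -addsmxE mxrank_disjoint_sum // (eq_row_base S1).1 (eq_row_base S2).1.
apply: (trsim_split (rb_stable s1) (rb_stable s2) _ _ T1 T2).
  by rewrite /row_free rkc rk.
by rewrite /row_full rkc.
Qed.

Lemma mxXS (F : fieldType) n (M : 'M[F]_n) a : M ^+ a *m M = M ^+ a.+1.
Proof. by rewrite exprSr. Qed.
Lemma mxXD (F : fieldType) n (M : 'M[F]_n) a b : M ^+ a *m M ^+ b = M ^+ (a + b).
Proof. by rewrite exprD. Qed.
Lemma mxX0 (F : fieldType) n (M : 'M[F]_n) m e : M ^+ m = 0 -> (m <= e)%N -> M ^+ e = 0.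
Proof. by move=> Mm h; rewrite -(subnKC h) exprD Mm mul0r. Qed.

Definition krylov (F : fieldType) n (u : 'rV[F]_n) (M : 'M_n) m : 'M_(m, n) :=
  \matrix_(a < m) (u *m M ^+ a).

Lemma krylov_stable (F : fieldType) n (u : 'rV[F]_n) (M : 'M_n) m :
  M ^+ m = 0 -> (krylov u M m *m M <= krylov u M m)%MS.
Proof.
move=> Mm; apply/row_subP => a; rewrite row_mul rowK -mulmxA mxXS.
case: (ltnP a.+1 m) => h.
  by have := row_sub (Ordinal h) (krylov u M m); rewrite rowK.
by rewrite (mxX0 Mm h) mulmx0 sub0mx.
Qed.

Lemma trmxX (F : fieldType) n (M : 'M[F]_n) b : (M ^+ b)^T = M^T ^+ b.
Proof.
elim: b => [|b IH]; first by rewrite !expr0 trmx1.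
by rewrite exprS -mulmxE trmx_mul IH mxXS.
Qed.

Lemma entE (F : fieldType) p q (X : 'M[F]_(p, q)) a b :
  X a b = ((delta_mx 0 a : 'rV_p) *m X *m (delta_mx b 0 : 'cV_q)) 0 0.
Proof. by rewrite -rowE -colE !mxE. Qed.


Lemma trsim_nilp (F : fieldType) n (N : 'M[F]_n.+1) k :
  N ^+ k = 0 -> (forall m, (m < n.+1)%N -> forall B : 'M[F]_m, trsim B) -> trsim N.
Proof.
move=> Nk IH.
have ex : exists k, N ^+ k == 0 by exists k; apply/eqP.
case: (ex_minnP ex) => m /eqP Nm minm.
have m0 : (0 < m)%N.
  rewrite lt0n; apply/eqP => m0; move: Nm; rewrite m0 expr0 => /eqP.
  by rewrite oner_eq0.
have Nm1 : N ^+ m.-1 != 0.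
  by apply/negP => /minm; rewrite leqNgt ltn_predL m0.
have [i [j gij]] : exists i j, (N ^+ m.-1) i j != 0.
  case: (pickP (fun ij : 'I_n.+1 * 'I_n.+1 => (N ^+ m.-1) ij.1 ij.2 != 0)) => [[i j] /= h|h].
    by exists i, j.
  case/negP: Nm1; apply/eqP/matrixP => i j; rewrite mxE; apply/eqP.
  by have := h (i, j); rewrite /= => /negbFE.
pose v : 'rV[F]_n.+1 := delta_mx 0 i.
pose c : 'cV[F]_n.+1 := delta_mx j 0.
pose Kv := krylov v N m.
pose Kc := (krylov c^T N^T m)^T.
have colKc : forall b : 'I_m, col b Kc = N ^+ b *m c.
  by move=> b; rewrite /Kc -tr_row rowK trmx_mul trmxX !trmxK.
have entry : forall (M : 'M_n.+1) (a b : 'I_m),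
    (Kv *m M *m Kc) a b = (N ^+ a *m M *m N ^+ b) i j.
  move=> M a b; rewrite entE [RHS]entE.
  rewrite !mulmxA -rowE rowK -!mulmxA -colE colKc.
  by rewrite !mulmxA.
have Gab : forall a b : 'I_m, (Kv *m Kc) a b = (N ^+ (a + b)) i j.
  by move=> a b; have := entry 1%:M a b; rewrite !mulmx1 mxXD.
have Gsym : (Kv *m Kc)^T = Kv *m Kc.
  by apply/matrixP => a b; rewrite mxE !Gab addnC.
have DGsym : (Kv *m N *m Kc)^T = Kv *m N *m Kc.
  by apply/matrixP => a b; rewrite mxE !entry !mxXS !mxXD !addSn addnC.
have Gu : Kv *m Kc \in unitmx.
  pose s := perm (@rev_ord_inj m).
  have : row_perm s (Kv *m Kc) \in unitmx.
    rewrite unitmxE unitfE det_trig.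
      rewrite (eq_bigr (fun _ => (N ^+ m.-1) i j)); first by rewrite prodr_const expf_neq0.
      move=> a _; rewrite mxE Gab permE /=; congr ((N ^+ _) i j).
      by have := ltn_ord a; lia.
    apply/is_trig_mxP => a b ab; rewrite mxE Gab permE /= (mxX0 Nm) ?mxE //.
    by have := ltn_ord b; rewrite /=; lia.
  by rewrite row_permE unitmx_mul => /andP[].
have rKv : \rank Kv = m.
  apply/eqP; rewrite eqn_leq rank_leq_row /=.
  move: (Gu); rewrite -row_free_unit => /eqP rG.
  by rewrite -{1}rG mxrankM_maxl.
have rKc : \rank Kc = m.
  apply/eqP; rewrite eqn_leq rank_leq_col /=.
  move: (Gu); rewrite -row_free_unit => /eqP rG.
  by rewrite -{1}rG mxrankM_maxr.
have mn : (m <= n.+1)%N by rewrite -rKv rank_leq_col.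
have stKv : (Kv *m N <= Kv)%MS := krylov_stable v Nm.
have stK : (kermx Kc *m N <= kermx Kc)%MS.
  apply/sub_kermxP.
  have : N^T ^+ m = 0 by rewrite -trmxX Nm trmx0.
  move/(krylov_stable c^T); case/submxP => Z HZ.
  have NK : N *m Kc = Kc *m Z^T.
    by apply: trmx_inj; rewrite !trmx_mul /Kc !trmxK.
  by rewrite -mulmxA NK mulmxA mulmx_ker mul0mx.
have cap : (Kv :&: kermx Kc)%MS = 0.
  apply/eqP/rowV0P => x; rewrite sub_capmx => /andP[/submxP[w ->] /sub_kermxP].
  rewrite -mulmxA => wG.
  by rewrite -[w](mulmxK Gu) wG !mul0mx.
case: (ltnP m n.+1) => [mlt|mge].
  apply: (trsim_subspace stKv stK cap).
  - by rewrite rKv mxrank_ker rKc subnKC.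
  - by apply: IH; rewrite rKv.
  - by apply: IH; rewrite mxrank_ker rKc; lia.
have m_eq : m = n.+1 by apply/eqP; rewrite eqn_leq mn mge.
apply: (@trsim_transfer _ _ _ _ Kv (Kv *m N *m pinvmx Kv)).
- by rewrite /row_free rKv.
- by rewrite /row_full rKv m_eq.
- by rewrite mulmxKpV.
exists (invmx (Kv *m Kc)); split; first by rewrite unitmx_inv.
set D := Kv *m N *m pinvmx Kv.
have pK : pinvmx Kv *m Kv = 1%:M.
  have := mulmxKpV (A := 1%:M) (B := Kv); rewrite mul1mx; apply.
  by rewrite sub1mx /row_full rKv m_eq.
have DG : D *m (Kv *m Kc) = Kv *m N *m Kc.
  by rewrite /D (mulmxA (Kv *m N *m pinvmx Kv) Kv Kc) -(mulmxA (Kv *m N) (pinvmx Kv) Kv) pK mulmx1.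
have DGT : (Kv *m Kc) *m D^T = D *m (Kv *m Kc).
  by rewrite -{1}Gsym -trmx_mul DG DGsym.
have := congr1 (fun X => invmx (Kv *m Kc) *m X *m invmx (Kv *m Kc)) DGT.
rewrite /= (mulmxA (invmx (Kv *m Kc)) (Kv *m Kc) D^T) (mulVmx Gu) mul1mx => ->.
by rewrite (mulmxA (invmx (Kv *m Kc)) D (Kv *m Kc)) (mulmxK Gu).
Qed.

Lemma trsim_all (F : closedFieldType) n (A : 'M[F]_n) : trsim A.
Proof.
elim/ltn_ind: n A => n IH A.
case: n IH A => [|n] IH A.
  exists 1%:M; split; first by rewrite unitmx1.
  by apply/matrixP => -[].
have [l rl] : exists l, root (char_poly A) l.
  by apply/closed_rootP; rewrite size_char_poly.
case: (multiplicity_XsubC (char_poly A) l) => mu [q /implyP nq Eq].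
have nq' : ~~ root q l.
  by apply: nq; rewrite monic_neq0 // char_poly_monic.
pose p1 := ('X - l%:P) ^+ mu.
have cop : coprimep p1 q by apply: coprimep_expl; rewrite coprimep_sym coprimep_XsubC.
pose S1 := kermxpoly A p1.
pose S2 := kermxpoly A q.
have cap : (S1 :&: S2 = 0)%MS := mxdirect_kermxpoly A cop.
have rk : (\rank S1 + \rank S2)%N = n.+1.
  rewrite -mxrank_disjoint_sum // -(kermxpolyM A cop).1.
  have -> : p1 * q = char_poly A by rewrite Eq mulrC.
  by rewrite (kermxpoly_min (mxminpoly_dvd_char A)).1 mxrank1.
have st : forall p, (kermxpoly A p *m A <= kermxpoly A p)%MS.
  by move=> p; apply: comm_mx_stable_kermxpoly.
case: (posnP (\rank S2)) => [r2|r2].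
  have r1 : \rank S1 = n.+1 by move: rk; rewrite r2 addn0.
  have hz : horner_mx A p1 = 0.
    apply/eqP; rewrite -mxrank_eq0.
    move: r1; rewrite /S1 /kermxpoly /= mxrank_ker.
    have := rank_leq_row (horner_mx A p1).
    move: (\rank (horner_mx A p1)) => r le h; by have -> : r = 0%N by lia.
  move: hz; rewrite /p1 rmorphXn /= rmorphB /= horner_mx_X horner_mx_C => hz.
  rewrite -(subrK l%:M A); apply: trsim_shift.
  exact: (trsim_nilp hz IH).
have r1 : (0 < \rank S1)%N.
  rewrite lt0n; apply/negP => /eqP r1.
  have r2' : \rank S2 = n.+1 by move: rk; rewrite r1.
  have hz : horner_mx A q = 0.
    apply/eqP; rewrite -mxrank_eq0.
    move: r2'; rewrite /S2 /kermxpoly /= mxrank_ker.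
    have := rank_leq_row (horner_mx A q).
    move: (\rank (horner_mx A q)) => r le h; by have -> : r = 0%N by lia.
  move/negP: nq'; apply; apply: (root_dvdp (mxminpoly_min hz)).
  by rewrite root_mxminpoly.
apply: (trsim_subspace (st p1) (st q) cap rk).
  by apply: IH; move: rk r2; rewrite /S1 /S2; lia.
by apply: IH; move: rk r1; rewrite /S1 /S2; lia.
Qed.

Notation cj := (map_mx (fun z : Cplx => z^*)).

Lemma cjE m n (A : 'M[Cplx]_(m,n)) : Defs.conjmx A = cj A.
Proof. by []. Qed.

Lemma cjM m n p (A : 'M[Cplx]_(m,n)) (B : 'M_(n,p)) : cj (A *m B) = cj A *m cj B.
Proof. exact: (map_mxM (@Num.conj _)). Qed.

Lemma cjK m n (A : 'M[Cplx]_(m,n)) : cj (cj A) = A.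
Proof. by apply/matrixP => i j; rewrite !mxE conjCK. Qed.

Lemma cjT m n (A : 'M[Cplx]_(m,n)) : cj A^T = (cj A)^T.
Proof. exact: esym (map_trmx _ _). Qed.

Lemma cjD m n (A B : 'M[Cplx]_(m,n)) : cj (A + B) = cj A + cj B.
Proof. by apply/matrixP => i j; rewrite !mxE rmorphD. Qed.
Lemma cjN m n (A : 'M[Cplx]_(m,n)) : cj (- A) = - cj A.
Proof. by apply/matrixP => i j; rewrite !mxE rmorphN. Qed.
Lemma cjZ m n a (A : 'M[Cplx]_(m,n)) : cj (a *: A) = a^* *: cj A.
Proof. by apply/matrixP => i j; rewrite !mxE rmorphM. Qed.
Lemma trZ m n a (A : 'M[Cplx]_(m,n)) : (a *: A)^T = a *: A^T.
Proof. by apply/matrixP => i j; rewrite !mxE. Qed.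
Lemma trD m n (A B : 'M[Cplx]_(m,n)) : (A + B)^T = A^T + B^T.
Proof. by apply/matrixP => i j; rewrite !mxE. Qed.
Lemma trN m n (A : 'M[Cplx]_(m,n)) : (- A)^T = - A^T.
Proof. by apply/matrixP => i j; rewrite !mxE. Qed.

Lemma herm_sol n (H X : 'M[Cplx]_n) : X \in unitmx -> X *m H = (cj H)^T *m X ->
  exists G : 'M[Cplx]_n, [/\ cj G^T = G, G \in unitmx & G *m H = (cj H)^T *m G].
Proof.
move=> XU XH.
pose Xs := (cj X)^T.
have XsH : Xs *m H = (cj H)^T *m Xs.
  have := congr1 (fun M => (cj M)^T) XH; rewrite /= !cjM !trmx_mul cjT cjK trmxK.
  by move=> ->.
pose M1 := X + Xs.
pose M2 := 'i *: (X - Xs).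
have relM1 : M1 *m H = (cj H)^T *m M1 by rewrite mulmxDl mulmxDr XH XsH.
have relM2 : M2 *m H = (cj H)^T *m M2.
  by rewrite -scalemxAl -scalemxAr mulmxBl mulmxBr XH XsH.
have hM1 : cj M1^T = M1.
  by rewrite trD cjD /Xs trmxK cjT cjK addrC.
have hM2 : cj M2^T = M2.
  rewrite trZ cjZ conjCi trD trN cjD cjN /Xs trmxK cjT cjK.
  by rewrite /M2 scaleNr -scalerN opprB.
pose Q : 'M[{poly Cplx}]_n := map_mx polyC M2 + 'X *: map_mx polyC M1.
pose q := \det Q.
have qE : forall t, q.[t] = \det (t *: M1 + M2).
  move=> t; rewrite /q -[_.[t]]/(horner_eval t (\det Q)) -det_map_mx.
  congr (\det _); apply/matrixP => i j; rewrite !mxE /horner_eval.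
  rewrite /= horner_evalE !hornerE; ring.
have q0 : q != 0.
  apply/eqP => q0; have := qE 'i; rewrite q0 horner0.
  have -> : 'i *: M1 + M2 = ('i *+ 2) *: X.
    by apply/matrixP => i j; rewrite !mxE; ring.
  have dX : \det X != 0 by rewrite -unitfE -unitmxE.
  rewrite detZ => /esym /eqP; rewrite mulf_eq0 expf_eq0 mulrn_eq0 (negPf (neq0Ci _)) (negPf dX).
  by rewrite !orbF; case/andP => _ /eqP h; discriminate h.

have : ~~ all (root q) [seq k%:R | k <- iota 0 (size q)].
  apply/negP => allr; have := max_poly_roots q0 allr.
  rewrite map_inj_uniq ?iota_uniq ?size_map ?size_iota ?ltnn //.
    by move/(_ isT).
  by move=> a b /eqP; rewrite eqr_nat => /eqP.
case/allPn => x /mapP [k _ ->] nr.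
exists (k%:R *: M1 + M2); split.
- by rewrite trD trZ cjD cjZ conjC_nat hM1 hM2.
- by rewrite unitmxE unitfE -qE.
- by rewrite mulmxDl mulmxDr -scalemxAl -scalemxAr relM1 relM2.
Qed.

Theorem corollary1 (n : nat) (H : 'M[Cplx]_n) :
  PT_symmetric H -> pseudo_hermitian H.
Proof.
move=> [P [PP PH]].
rewrite cjE in PH.
have [Y [YU YA]] := trsim_all (cj H).
have [PU _] := mulmx1_unit PP.
have AP : cj H = P *m H *m P.
  have := congr1 (mulmx P) PH; rewrite mulmxA PP mul1mx => ->.
  by rewrite mulmxA.
have PHA : P *m H = cj H *m P by rewrite AP -!mulmxA PP mulmx1.
have XH : (Y *m P) *m H = (cj H)^T *m (Y *m P).
  by rewrite -mulmxA PHA mulmxA YA mulmxA.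
have XU : Y *m P \in unitmx by rewrite unitmx_mul YU PU.
have [G [hG GU GH]] := herm_sol XU XH.
exists G, (- (G *m H)); split => //.
- change (cj (- (G *m H))^T = - (G *m H)).
  rewrite trN cjN trmx_mul cjM GH cjT hG.
  by rewrite -GH.
- by rewrite mulmxN opprK mulmxA mulVmx // mul1mx.
Qed.
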